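(* Let $\lambda=(\lambda_1,\ldots,\lambda_\ell)$ be a partition with $\ell$ positive parts, and let $\mu=(\lambda_a,\lambda_{a+1},\ldots,\lambda_b)$ for some $1\leq a\leq b\leq\ell$ (a consecutive subpartition), having $m=b-a+1$ parts. Suppose $n\geq\ell$. Then the poset $\mathcal B_\mu^{n-\ell+m}$ is isomorphic to an interval in the poset $\mathcal B_\lambda^n$. In particular, if $\mathcal B_\mu^{n-\ell+m}$ is not a lattice, then $\mathcal B_\lambda^n$ is not a lattice.
   Context: For $N\geq 1$ and a partition $\nu$ with at most $N$ positive parts, $\mathcal B_\nu^N$ is the set of semistandard Young tableaux of shape $\nu$ (rows weakly increasing, columns strictly increasing) with entries in $\{1,\ldots,N+1\}$, partially ordered by the reflexive transitive closure of $T<F_i(T)$ for $i\in\{1,\ldots,N\}$ with $F_i(T)\neq 0$. Here $F_i$ is the type A crystal lowering operator: in the reading word of $T$ (rows read from bottom to top, each row left to right) keep only letters $i$ and $i+1$, replace each $i$ by '')'' and each $i+1$ by ''('', and match parentheses in the usual way; if there is no unmatched '')'', $F_i(T)=0$; otherwise $F_i(T)$ is obtained by changing the entry $i$ corresponding to the rightmost unmatched '')'' into $i+1$. *)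

(* Defs.v *)
From Stdlib Require Import Relations.
From mathcomp Require Import all_boot.
Set Implicit Arguments. Unset Strict Implicit. Unset Printing Implicit Defensive.

Definition is_partition (nu : seq nat) : bool :=
  sorted geq nu && all (fun x => 0 < x) nu.

(* A tableau is a list of rows (row 1 first), each row a list of entries. *)
Definition tableau := seq (seq nat).

Definition is_ssyt (N : nat) (nu : seq nat) (T : tableau) : Prop :=
  [/\ map size T = nu,
      (forall r, r < size T -> sorted leq (nth [::] T r)),
      (forall r c, r.+1 < size T -> c < size (nth [::] T r.+1) ->
          nth 0 (nth [::] T r) c < nth 0 (nth [::] T r.+1) c)
    & (forall r, r < size T -> all (fun x => 0 < x <= N.+1) (nth [::] T r))].

Definition B (nu : seq nat) (N : nat) (T : tableau) : Prop := is_ssyt N nu T.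

Definition reading_word (T : tableau) : seq nat := flatten (rev T).

(* Bracket scan: i is ")" and i+1 is "(".  Returns the position of the
   rightmost unmatched ")" (if any).  [opn] counts unmatched "(" so far. *)
Fixpoint scan (i : nat) (w : seq nat) (pos opn : nat) (last : option nat)
  : option nat :=
  match w with
  | [::] => last
  | x :: w' =>
      if x == i.+1 then scan i w' pos.+1 opn.+1 last
      else if x == i then
        (if 0 < opn then scan i w' pos.+1 opn.-1 last
         else scan i w' pos.+1 opn (Some pos))
      else scan i w' pos.+1 opn last
  end.

(* Crystal lowering operator on words; None plays the role of 0. *)
Definition Fword (i : nat) (w : seq nat) : option (seq nat) :=
  match scan i w 0 0 None with
  | None => None
  | Some p => Some (set_nth 0 w p i.+1)
  end.

(* Crystal lowering operator on tableaux: modify the reading word and put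
   the letters back into the same cells. *)
Definition Fop (i : nat) (T : tableau) : option tableau :=
  match Fword i (reading_word T) with
  | None => None
  | Some w => Some (rev (reshape (rev (map size T)) w))
  end.

Definition step (N : nat) (T T' : tableau) : Prop :=
  exists2 i, 0 < i <= N & Fop i T = Some T'.

Definition Ble (N : nat) : relation tableau := clos_refl_trans tableau (step N).

Definition is_lattice (P : tableau -> Prop) (le : relation tableau) : Prop :=
  forall x y, P x -> P y ->
    (exists z, [/\ P z, le x z, le y z &
                  forall u, P u -> le x u -> le y u -> le z u]) /\
    (exists z, [/\ P z, le z x, le z y &
                  forall u, P u -> le u x -> le u y -> le u z]).

(* Main.v *)
Require Import Defs.
From Stdlib Require Import Relations.
From mathcomp Require Import all_boot.
From mathcomp Require Import zify.
Set Implicit Arguments. Unset Strict Implicit. Unset Printing Implicit Defensive.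

Fixpoint opnf (i : nat) (w : seq nat) (o : nat) : nat :=
  match w with
  | [::] => o
  | x :: w' => opnf i w' (if x == i.+1 then o.+1 else if x == i then o.-1 else o)
  end.

Fixpoint good (i : nat) (w : seq nat) (o : nat) : bool :=
  match w with
  | [::] => true
  | x :: w' => if x == i.+1 then good i w' o.+1
               else if x == i then (0 < o) && good i w' o.-1
               else good i w' o
  end.

Lemma opnf_cat i u v o : opnf i (u ++ v) o = opnf i v (opnf i u o).
Proof. by elim: u o => //= x u IH o. Qed.

Lemma good_cat i u v o : good i (u ++ v) o = good i u o && good i v (opnf i u o).
Proof.
elim: u o => //= x u IH o.
case: ifP => _; first exact: IH.
case: ifP => _; last exact: IH.
by rewrite IH andbA.
Qed.

Lemma scan_last i w pos o last :
  scan i w pos o last = if scan i w pos o None is Some q then Some q else last.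
Proof.
elim: w pos o last => //= x w IH pos o last.
case: ifP => _; first exact: IH.
case: ifP => _; last exact: IH.
case: ifP => _; first exact: IH.
rewrite IH; by case: (scan i w pos.+1 o None).
Qed.

Lemma scan_SomeP i w pos o p : scan i w pos o (Some p) <> None.
Proof. by rewrite scan_last; case: (scan _ _ _ _ None). Qed.

Lemma good_scan i w pos o : (scan i w pos o None == None) = good i w o.
Proof.
elim: w pos o => //= x w IH pos o.
case: ifP => _; first exact: IH.
case: ifP => _; last exact: IH.
case: ifP => o0 /=; first exact: IH.
by apply/eqP; apply: scan_SomeP.
Qed.

Lemma scan_inv i w pos o p : scan i w pos o None = Some p ->
  exists u v, [/\ w = u ++ i :: v, p = pos + size u, opnf i u o = 0 & good i v 0].
Proof.
elim: w pos o p => //= x w IH pos o p.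
case: ifP => Hx1.
  move=> /IH [u [v [-> -> Hu Hv]]]; exists (x :: u), v.
  by split => //=; rewrite ?addSnnS ?Hx1.
case: ifP => Hx0.
  case: ifP => Ho.
    move=> /IH [u [v [-> -> Hu Hv]]]; exists (x :: u), v.
    by split => //=; rewrite ?addSnnS ?Hx1 ?Hx0 ?(eqP Hx0).
  rewrite scan_last; case E: (scan i w pos.+1 o None) => [q|].
    move=> [<-]; move: E => /IH [u [v [-> -> Hu Hv]]]; exists (x :: u), v.
    split => //=; rewrite ?addSnnS ?Hx1 ?Hx0 ?(eqP Hx0) //.
    by move: Ho Hu; case: o.
  have o0 : o = 0 by clear E; move: Ho; case: o.
  subst o; move=> [<-]; exists [::], w; split => //=; rewrite ?(eqP Hx0) ?addn0 //.
  by rewrite -(good_scan _ _ pos.+1) E.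
move=> /IH [u [v [-> -> Hu Hv]]]; exists (x :: u), v.
by split => //=; rewrite ?addSnnS ?Hx1 ?Hx0.
Qed.

Lemma scan_mk i u v pos o : opnf i u o = 0 -> good i v 0 ->
  scan i (u ++ i :: v) pos o None = Some (pos + size u).
Proof.
elim: u pos o => [|x u IH] pos o /=.
  move=> -> Hv; rewrite (_ : (i == i.+1) = false); last by apply/eqP; lia.
  rewrite eqxx /=.
  by rewrite /= scan_last; move: Hv; rewrite -(good_scan _ _ pos.+1) => /eqP ->; rewrite addn0.
case: ifP => Hx1.
  by move=> Hu Hv; rewrite IH // addSnnS.
case: ifP => Hx0.
  case: ifP => Ho.
    by move=> Hu Hv; rewrite IH // addSnnS.
  move=> Hu Hv; rewrite scan_last IH ?addSnnS //.
  by move: Ho Hu; case: o.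
by move=> Hu Hv; rewrite IH // addSnnS.
Qed.


Definition irr i (x : nat) := (x != i) && (x != i.+1).

Lemma opnf_irrel i u o : all (irr i) u -> opnf i u o = o.
Proof. by elim: u => //= x u IH /andP [/andP [/negbTE -> /negbTE ->] /IH]. Qed.

Lemma good_irrel i u o : all (irr i) u -> good i u o.
Proof. by elim: u => //= x u IH /andP [/andP [/negbTE -> /negbTE ->] /IH]. Qed.

Lemma opnf_shift i d w o : opnf (i + d) (map (addn^~ d) w) o = opnf i w o.
Proof.
elim: w o => //= x w IH o; rewrite -addSn !eqn_add2r; exact: IH.
Qed.

Lemma good_shift i d w o : good (i + d) (map (addn^~ d) w) o = good i w o.
Proof.
elim: w o => //= x w IH o; rewrite -addSn !eqn_add2r !IH; done.
Qed.

Lemma opnf_noi i w o : (forall x, x \in w -> x != i) ->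
  opnf i w o = o + count (pred1 i.+1) w.
Proof.
elim: w o => [|x w IH] o /=; first by rewrite addn0.
move=> H; have Hx : x != i by apply: H; rewrite inE eqxx.
rewrite (negbTE Hx); rewrite IH; last by move=> y Hy; apply: H; rewrite inE Hy orbT.
by case: ifP => _ /=; rewrite ?addSnnS ?add0n ?addn0.
Qed.

Lemma opnf_ge_sub i w o : o - count (pred1 i) w <= opnf i w o.
Proof.
elim: w o => //= [o|x w IH o]; first by rewrite subn0.
case: ifP => /eqP H1.
  have Hx : (x == i) = false by apply/eqP; lia.
  rewrite Hx add0n; apply: leq_trans (IH _); lia.
case: ifP => /eqP H0.
  rewrite add1n subnS; apply: leq_trans (IH _); lia.
by rewrite add0n; apply: IH.
Qed.

Lemma opnf_mono i w o o' : o <= o' -> opnf i w o <= opnf i w o'.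
Proof.
elim: w o o' => //= x w IH o o' H.
apply: IH; case: ifP => _; first by [].
case: ifP => _; last by []. by rewrite -!subn1 leq_sub2r.
Qed.

Lemma opnf_sorted_ge i w o : sorted leq w -> count (pred1 i.+1) w <= opnf i w o.
Proof.
elim: w o => //= x w IH o Hs.
have Hw : sorted leq w := path_sorted Hs.
case: ifP => /eqP H1.
  rewrite opnf_noi; first by rewrite add1n ltnS leq_addl.
  move=> y Hy; move: Hs; rewrite path_sortedE; last exact: leq_trans.
  by case/andP => /allP /(_ _ Hy); rewrite H1 => Hle _; apply/eqP; lia.
rewrite add0n; case: ifP => _; exact: IH.
Qed.

Lemma good_prefix i u v o : good i (u ++ v) o ->
  count (pred1 i) u <= o + count (pred1 i.+1) u.
Proof.
elim: u o => [|x u IH] o /=; first by [].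
case: ifP => /eqP H1.
  have Hx : (x == i) = false by apply/eqP; lia.
  by rewrite Hx /= add0n addnA addn1 => /IH.
have Hx1 : (x == i.+1) = false by apply/eqP.
case: ifP => /eqP H0.
  rewrite ?Hx1 ?H0 ?eqxx /=; case/andP; case: o => // o _ /IH /=.
  by rewrite add0n add1n addSn ltnS.
have Hx : (x == i) = false by apply/eqP.
by rewrite ?Hx ?Hx1 /= !add0n => /IH.
Qed.

Lemma allge_sorted (x : nat) P : sorted leq (x :: P) -> forall y, y \in P -> x <= y.
Proof.
move=> /= Hs y Hy; move: Hs; rewrite path_sortedE; last exact: leq_trans.
by case/andP => /allP /(_ _ Hy).
Qed.

Lemma notgood_sorted i P t : sorted leq P -> t < count (pred1 i) P -> ~~ good i P t.
Proof.
elim: P t => //= x P IH t Hs.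
have HP : sorted leq P := path_sorted Hs.
case: ifP => /eqP H1.
  have -> : count (pred1 i) P = 0.
    rewrite -(count_pred0 P); apply: eq_in_count => y Hy /=.
    apply/eqP; have := allge_sorted Hs Hy; lia.
  by have -> : (x == i) = false by apply/eqP; lia.
case: ifP => /eqP H0.
  rewrite add1n ltnS => Ht; case: t Ht => //= t Ht; exact: IH.
by rewrite add0n => Ht; apply: IH.
Qed.

Lemma unmatched_open i w o : 0 < opnf i w o ->
  (0 < o /\ good i w o.-1) \/
  exists u v, [/\ w = u ++ i.+1 :: v, opnf i u o = 0 & good i v 0].
Proof.
elim: w o => [|x w IH] o /=; first by move=> H; left.
case: ifP => /eqP H1.
  move=> /IH [[_ Hg]|[u [v [-> Hu Hv]]]].
    case: o Hg => [|o] Hg /=.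
      by right; exists [::], w; rewrite H1.
    by left.
  by right; exists (x :: u), v; split => //=; rewrite H1 eqxx.
have Hx1 : (x == i.+1) = false by apply/eqP.
case: ifP => /eqP H0.
  move=> /IH [[Ho Hg]|[u [v [-> Hu Hv]]]].
    left; split; first by lia.
    by apply/andP; split; [lia|].
  right; exists (x :: u), v; split => //=.
  by rewrite Hx1 H0 eqxx.
have Hx : (x == i) = false by apply/eqP.
move=> /IH [[Ho Hg]|[u [v [-> Hu Hv]]]].
  by left.
right; exists (x :: u), v; split => //=.
by rewrite Hx1 Hx.
Qed.

Lemma count_pw (s1 s2 : seq nat) x y : size s1 <= size s2 ->
  (forall j, j < size s1 -> nth 0 s1 j = x -> nth 0 s2 j = y) ->
  count (pred1 x) s1 <= count (pred1 y) s2.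
Proof.
elim: s1 s2 => //= a s1 IH [|b s2] //= Hs H.
have Hab : (a == x) -> (b == y).
  by move=> /eqP Ha; apply/eqP; apply: (H 0).
apply: leq_add.
  by case: (a == x) Hab => // /(_ isT) ->.
apply: IH => // j Hj; exact: (H j.+1).
Qed.


Lemma cat_split (T : Type) (y t u v : seq T) (x : T) : y ++ t = u ++ x :: v ->
  (exists L R, [/\ y = L ++ x :: R, u = L & v = R ++ t]) \/
  (exists u', u = y ++ u' /\ t = u' ++ x :: v).
Proof.
elim: y u => [|z y IH] u /=; first by move=> ->; right; exists u.
case: u => [|z' u] /=.
  by move=> [-> <-]; left; exists [::], y.
move=> [-> /IH [[L [R [-> -> ->]]]|[u' [-> ->]]]].
  by left; exists (z' :: L), R.
by right; exists u'.
Qed.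

Lemma flatten_split (Y : seq (seq nat)) u x v : flatten Y = u ++ x :: v ->
  exists Y1 L R Y2, [/\ Y = Y1 ++ (L ++ x :: R) :: Y2, u = flatten Y1 ++ L &
                        v = R ++ flatten Y2].
Proof.
elim: Y u => [|y Y IH] u /=; first by case: u.
move=> H; case: (cat_split H) => [[L [R [-> -> ->]]]|[u' [-> /IH [Y1 [L [R [Y2 [-> -> ->]]]]]]]].
  by exists [::], L, R, Y.
by exists (y :: Y1), L, R, Y2; rewrite /= catA.
Qed.

Lemma rw_mid (A B : tableau) row :
  reading_word (A ++ row :: B) = flatten (rev B) ++ row ++ flatten (rev A).
Proof. by rewrite /reading_word rev_cat rev_cons flatten_cat flatten_rcons catA. Qed.

Lemma rw_cat (A B : tableau) :
  reading_word (A ++ B) = reading_word B ++ reading_word A.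
Proof. by rewrite /reading_word rev_cat flatten_cat. Qed.

Lemma tab_key (X : tableau) : rev (reshape (rev (map size X)) (reading_word X)) = X.
Proof. by rewrite /reading_word -map_rev flattenK revK. Qed.

Lemma tab_det (X Y : tableau) : map size X = map size Y ->
  reading_word X = reading_word Y -> X = Y.
Proof. by move=> Hs Hr; rewrite -(tab_key X) -(tab_key Y) Hs Hr. Qed.

Lemma set_nth_mid (u v : seq nat) x y : set_nth 0 (u ++ x :: v) (size u) y = u ++ y :: v.
Proof. by elim: u => //= z u ->. Qed.

Lemma Fop_None i T : Fop i T = None <-> good i (reading_word T) 0.
Proof.
rewrite /Fop /Fword -(good_scan _ _ 0); case: (scan _ _ _ _ _) => //.
Qed.

Lemma Fop_inv i T T2 : Fop i T = Some T2 ->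
  exists A L R B, [/\ T = A ++ (L ++ i :: R) :: B, T2 = A ++ (L ++ i.+1 :: R) :: B,
    opnf i (flatten (rev B) ++ L) 0 = 0 & good i (R ++ flatten (rev A)) 0].
Proof.
rewrite /Fop /Fword; case E: (scan _ _ _ _ _) => [p|] // [<-].
move: E => /scan_inv [u [v [Hw -> Hu Hv]]].
have HW2 : flatten (rev T) = u ++ i :: v by exact: Hw.
case: (flatten_split HW2) => [Y1 [L [R [Y2 [HY Hu' Hv']]]]].
have HT : T = rev Y2 ++ (L ++ i :: R) :: rev Y1.
  by rewrite -(revK T) HY rev_cat rev_cons cat_rcons.
exists (rev Y2), L, R, (rev Y1); split => //; last by rewrite revK -Hv'.
  rewrite add0n Hw set_nth_mid.
  set T3 := (rev Y2 ++ _ :: _).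
  have -> : u ++ i.+1 :: v = reading_word T3.
    by rewrite rw_mid !revK Hu' Hv' -!catA.
  have -> : map size T = map size T3 by rewrite HT !map_cat /= !size_cat.
  exact: tab_key.
by rewrite revK -Hu'.
Qed.

Lemma Fop_mk i (A B : tableau) L R :
  opnf i (flatten (rev B) ++ L) 0 = 0 -> good i (R ++ flatten (rev A)) 0 ->
  Fop i (A ++ (L ++ i :: R) :: B) = Some (A ++ (L ++ i.+1 :: R) :: B).
Proof.
move=> Hu Hv; rewrite /Fop /Fword.
have Hw : reading_word (A ++ (L ++ i :: R) :: B) =
          (flatten (rev B) ++ L) ++ i :: (R ++ flatten (rev A)).
  by rewrite rw_mid -!catA.
rewrite Hw scan_mk // add0n set_nth_mid; congr Some.
set T' := (A ++ (L ++ i.+1 :: R) :: B).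
have -> : (flatten (rev B) ++ L) ++ i.+1 :: R ++ flatten (rev A) = reading_word T'.
  by rewrite rw_mid -!catA.
have -> : map size (A ++ (L ++ i :: R) :: B) = map size T'
  by rewrite !map_cat /= !size_cat.
exact: tab_key.
Qed.


Definition colrel (u w : seq nat) : bool :=
  all (fun c => nth 0 u c < nth 0 w c) (iota 0 (size w)).

Definition bnd N (x : nat) := 0 < x <= N.+1.

Definition ssytS N (T : tableau) : bool :=
  [&& all (sorted leq) T, sorted colrel T & all (all (bnd N)) T].

Lemma colrelP u w : reflect (forall c, c < size w -> nth 0 u c < nth 0 w c) (colrel u w).
Proof.
apply: (iffP allP) => H c.
  by move=> Hc; apply: H; rewrite mem_iota.
by rewrite mem_iota => /andP [_ Hc]; apply: H.
Qed.

Lemma ssytE N nu T : is_ssyt N nu T <-> map size T = nu /\ ssytS N T.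
Proof.
split.
  case=> Hs Hr Hc Hb; split => //; apply/and3P; split.
  - by apply/(all_nthP [::]) => r Hr'; apply: Hr.
  - apply/(sortedP [::]) => r Hr'; apply/colrelP => c Hc'; exact: Hc.
  - by apply/(all_nthP [::]) => r Hr'; apply: Hb.
case=> Hs /and3P [Hr Hc Hb]; split => //.
- by move=> r Hr'; apply: (all_nthP [::] Hr).
- by move=> r c Hr' Hc'; apply: (colrelP _ _ ((sortedP [::] Hc) r Hr')).
- by move=> r Hr'; apply: (all_nthP [::] Hb).
Qed.

Lemma sorted_mid_above (T : Type) (r : rel T) A x B a0 A' :
  sorted r (A ++ x :: B) -> A = a0 :: A' -> r (last a0 A') x.
Proof.
move=> H HA; move: H; rewrite sorted_cat_cons HA /= rcons_path.
by case/andP => /andP [].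
Qed.

Lemma sorted_mid_below (T : Type) (r : rel T) A x B b B' :
  sorted r (A ++ x :: B) -> B = b :: B' -> r x b.
Proof.
by move=> H HB; move: H; rewrite sorted_cat_cons HB /= => /andP [_ /andP []].
Qed.

Lemma sorted_mid_replace (T : Type) (r : rel T) A x x' B :
  sorted r (A ++ x :: B) ->
  (forall a0 A', A = a0 :: A' -> r (last a0 A') x') ->
  (forall b B', B = b :: B' -> r x' b) ->
  sorted r (A ++ x' :: B).
Proof.
rewrite !sorted_cat_cons => /andP [H1 H2] Ha Hb; apply/andP; split.
  case: A H1 Ha => [|a0 A'] //= H1 Ha.
  rewrite rcons_path Ha // andbT; move: H1; rewrite rcons_path.
  by case/andP.
case: B H2 Hb => [|b B'] //= /andP [_ ->]; rewrite andbT => Hb; exact: Hb.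
Qed.

Lemma nth_mid (L R : seq nat) x y c :
  nth 0 (L ++ x :: R) c = if c == size L then x else nth 0 (L ++ y :: R) c.
Proof.
rewrite !nth_cat; case: ltngtP => H //=.
  by case E: (c - size L) => //; lia.
by rewrite H subnn.
Qed.

Lemma sorted_drop_ge (s : seq nat) k y : sorted leq s -> k < size s ->
  y \in drop k.+1 s -> nth 0 s k <= y.
Proof.
move=> Hs Hk Hy; have E := cat_take_drop k s.
rewrite (drop_nth 0 Hk) in E.
have H2 : sorted leq (nth 0 s k :: drop k.+1 s).
  by move: Hs; rewrite -{1}E => /cat_sorted2 [].
exact: (allge_sorted H2 Hy).
Qed.


Lemma sorted_nth_le (s : seq nat) j k : sorted leq s -> j <= k -> k < size s ->
  nth 0 s j <= nth 0 s k.
Proof.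
move=> Hs Hjk Hk; apply: (sorted_leq_nth leq_trans leqnn 0 Hs) => //; rewrite inE //.
exact: leq_ltn_trans Hjk Hk.
Qed.

Lemma nth_midE (L R : seq nat) x : nth 0 (L ++ x :: R) (size L) = x.
Proof. by rewrite nth_cat ltnn subnn. Qed.

Lemma nth_mid_ne (L R : seq nat) x y c : c != size L ->
  nth 0 (L ++ x :: R) c = nth 0 (L ++ y :: R) c.
Proof. by move=> H; rewrite (nth_mid _ _ _ y) (negbTE H). Qed.

Lemma F_ssyt N i T T' : ssytS N T -> 0 < i <= N -> Fop i T = Some T' ->
  ssytS N T' /\ map size T' = map size T.
Proof.
move=> HT Hi /Fop_inv [A [L [R [B [ET ET' Hu Hv]]]]]; subst T T'.
split; last by rewrite !map_cat /= !size_cat.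
move: HT; rewrite /ssytS => /and3P [Hr Hc Hb].
have Hrow : sorted leq (L ++ i :: R).
  by move: Hr; rewrite all_cat /= => /andP [_ /andP [-> _]].
have hR : forall y, y \in R -> i.+1 <= y.
  case: R Hrow Hv {Hr Hc Hb} => [|y R'] //= Hrow Hv z.
  have Hs2 : sorted leq (i :: y :: R') by have [] := cat_sorted2 Hrow.
  have Hiy : i <= y by apply: (allge_sorted Hs2); rewrite inE eqxx.
  have yi : y != i.
    apply/negP => /eqP Ey; move: Hv; rewrite Ey eqxx.
    by rewrite (_ : (i == i.+1) = false) //; apply/eqP; lia.
  have Hs3 : sorted leq (y :: R') by move: Hs2 => /= /andP [].
  rewrite inE => /orP [/eqP -> | Hz]; first by lia.
  have := allge_sorted Hs3 Hz; lia.
rewrite /ssytS; apply/and3P; split.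
- move: Hr; rewrite !all_cat /= => /andP [-> /andP [_ ->]]; rewrite andbT /=.
  apply: (sorted_mid_replace Hrow).
    by move=> a0 L' EL; have := sorted_mid_above Hrow EL; lia.
  by move=> y R' ER; apply: hR; rewrite ER inE eqxx.
- apply: (sorted_mid_replace Hc).
    move=> a0 A' EA; have H := sorted_mid_above Hc EA.
    apply/colrelP => c; rewrite size_cat /= => Hcs.
    have := colrelP _ _ H c; rewrite size_cat /= => /(_ Hcs).
    case: (eqVneq c (size L)) => [->|Hne]; first by rewrite !nth_midE; lia.
    by rewrite (@nth_mid_ne L R i.+1 i c Hne).
  move=> b B' EB; have H := sorted_mid_below Hc EB.
  apply/colrelP => c Hcb.
  case: (eqVneq c (size L)) => [Ec|Hne]; last first.
    by rewrite (@nth_mid_ne L R i.+1 i c Hne); apply: (colrelP _ _ H).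
  subst c; rewrite nth_midE.
  have Hlt := colrelP _ _ H _ Hcb; rewrite nth_midE in Hlt.
  rewrite ltn_neqAle Hlt andbT; apply/eqP => Eb.
  have Hbs : sorted leq b.
    by apply: (allP Hr); rewrite EB mem_cat !inE eqxx !orbT.
  move: Hu; rewrite EB rev_cons flatten_rcons !opnf_cat.
  set o1 := opnf i (flatten (rev B')) 0 => Hu.
  set c := size L in Hcb Hlt Eb Hu *.
  have H2 : count (pred1 i) L < opnf i b o1.
    have E := cat_take_drop c.+1 b.
    rewrite -E opnf_cat.
    have Hd : forall y, y \in drop c.+1 b -> y != i.
      move=> y Hy; have := sorted_drop_ge Hbs Hcb Hy; rewrite -Eb; lia.
    rewrite opnf_noi; last exact: Hd.
    apply: leq_trans (leq_addr _ _).
    apply: leq_trans (opnf_sorted_ge _ _ _); last first.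
      by move: Hbs; rewrite -{1}E => /cat_sorted2 [].
    have Hrow_c : c < size (L ++ i :: R) by rewrite size_cat /= /c; lia.
    have := @count_pw (take c.+1 (L ++ i :: R)) (take c.+1 b) i i.+1.
    rewrite take_cat ltnNge leqnSn /= subSnn /= take0 count_cat /= eqxx addn0 addn1.
    apply; first by rewrite size_cat /= size_take; case: ifP; rewrite /c; lia.
    move=> j; rewrite size_cat /= => Hj Hji.
    have Hj' : j < c.+1 by rewrite /c; lia.
    rewrite nth_take //.
    have Hjb : j < size b by lia.
    have Hlt2 := colrelP _ _ H _ Hjb.
    have Hle := sorted_nth_le Hbs (ltnSE Hj') Hcb.
    have Hji' : nth 0 (L ++ i :: R) j = i.
      move: Hji; rewrite !nth_cat; case: ifP => // Hjl.
      by rewrite (_ : j - size L = 0) //; rewrite /c in Hj'; lia.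
    apply/eqP; lia.
  have := opnf_ge_sub i L (opnf i b o1); rewrite Hu; lia.
- move: Hb; rewrite !all_cat /= => /andP [-> /andP [Hrw ->]]; rewrite andbT /=.
  move: Hrw; rewrite !all_cat /= => /andP [-> /andP [_ ->]]; rewrite andbT /=.
  by rewrite /bnd; apply/andP; split; lia.
Qed.


Lemma E_ssyt N i A L R B : ssytS N (A ++ (L ++ i.+1 :: R) :: B) ->
  sorted geq (map size (A ++ (L ++ i.+1 :: R) :: B)) -> 0 < i ->
  opnf i (flatten (rev B) ++ L) 0 = 0 -> good i (R ++ flatten (rev A)) 0 ->
  ssytS N (A ++ (L ++ i :: R) :: B).
Proof.
rewrite /ssytS => /and3P [Hr Hc Hb] Hsh Hi Hu Hv.
have Hrow : sorted leq (L ++ i.+1 :: R).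
  by move: Hr; rewrite all_cat /= => /andP [_ /andP [-> _]].
have hL : forall a0 L', L = a0 :: L' -> last a0 L' <= i.
  move=> a0 L' EL; have H1 := sorted_mid_above Hrow EL.
  have : last a0 L' != i.+1.
    apply/negP => /eqP El; move: Hu; rewrite EL lastI El -cats1 catA opnf_cat /= eqxx.
    by [].
  lia.
have hR : forall y, y \in R -> i.+1 <= y.
  have [_ Hs2] := cat_sorted2 Hrow; exact: allge_sorted Hs2.
apply/and3P; split.
- move: Hr; rewrite !all_cat /= => /andP [-> /andP [_ ->]]; rewrite andbT /=.
  apply: (sorted_mid_replace Hrow); first exact: hL.
  by move=> y R' ER; have := hR y; rewrite ER inE eqxx => /(_ isT); lia.
- apply: (sorted_mid_replace Hc); last first.
    move=> b B' EB; have H := sorted_mid_below Hc EB.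
    apply/colrelP => c Hcb.
    case: (eqVneq c (size L)) => [Ec|Hne]; last first.
      by rewrite (@nth_mid_ne L R i i.+1 c Hne); apply: (colrelP _ _ H).
    subst c; rewrite nth_midE.
    have Hlt := colrelP _ _ H _ Hcb; rewrite nth_midE in Hlt; lia.
  move=> a0 A' EA; have H := sorted_mid_above Hc EA.
  set P := last a0 A' in H *.
  apply/colrelP => c; rewrite size_cat /= => Hcs.
  have := colrelP _ _ H c; rewrite size_cat /= => /(_ Hcs).
  case: (eqVneq c (size L)) => [Ec|Hne]; last by rewrite (@nth_mid_ne L R i i.+1 c Hne).
  subst c; rewrite !nth_midE => Hlt.
  have HPs : sorted leq P.
    by apply: (allP Hr); rewrite EA mem_cat /P mem_last.
  have Hsz : size (L ++ i.+1 :: R) <= size P.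
    have Hsh' : sorted geq (map size A ++ size (L ++ i.+1 :: R) :: map size B).
      by rewrite -map_cons -map_cat.
    have EA' : map size A = size a0 :: map size A' by rewrite EA.
    by have := sorted_mid_above Hsh' EA'; rewrite last_map.
  rewrite ltn_neqAle -ltnS Hlt andbT; apply/negP => /eqP EP.
  move: Hv; rewrite EA lastI rev_rcons /= -/P good_cat => /andP [_].
  rewrite good_cat => /andP [HgP _].
  have Hnoi : forall y, y \in R -> y != i by move=> y /hR; lia.
  rewrite (opnf_noi _ Hnoi) add0n in HgP.
  move: HgP; apply/negP; apply: notgood_sorted => //.
  rewrite -(cat_take_drop (size L) P) count_cat.
  apply: leq_trans (leq_addl _ _).
  have := @count_pw (i.+1 :: R) (drop (size L) P) i.+1 i.
  rewrite /= eqxx add1n; apply.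
    by rewrite size_drop; move: Hsz; rewrite size_cat /=; lia.
  move=> j Hj Hj1; rewrite nth_drop.
  have Ej : nth 0 (L ++ i.+1 :: R) (size L + j) = i.+1.
    by rewrite nth_cat ltnNge leq_addr /= addKn.
  have Hjr : size L + j < size (L ++ i.+1 :: R) by rewrite size_cat /=; lia.
  have H1 := colrelP _ _ H _ Hjr; rewrite Ej in H1.
  have H2 := sorted_nth_le HPs (leq_addr j (size L)) (leq_trans Hjr Hsz).
  apply/eqP; lia.
- move: Hb; rewrite !all_cat /= => /andP [-> /andP [Hrw ->]]; rewrite andbT /=.
  move: Hrw; rewrite !all_cat /= => /andP [-> /andP [Hx ->]]; rewrite andbT /=.
  by move: Hx; rewrite /bnd; lia.
Qed.


Lemma mem_rw (X : tableau) x : x \in reading_word X -> exists2 r, r \in X & x \in r.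
Proof.
by rewrite /reading_word => /flattenP [r]; rewrite mem_rev => Hr Hx; exists r.
Qed.

Lemma mem_rw2 (X : tableau) x r : r \in X -> x \in r -> x \in reading_word X.
Proof.
by move=> Hr Hx; rewrite /reading_word; apply/flattenP; exists r; rewrite ?mem_rev.
Qed.

Lemma ssyt_bnd N X x : ssytS N X -> x \in reading_word X -> 0 < x <= N.+1.
Proof.
move=> /and3P [_ _ Hb] /mem_rw [r Hr Hx].
exact: (allP (allP Hb r Hr) x Hx).
Qed.

Lemma ent_bnd N X r c : ssytS N X -> r < size X -> c < size (nth [::] X r) ->
  0 < nth 0 (nth [::] X r) c <= N.+1.
Proof.
move=> HX Hr Hc; apply: (ssyt_bnd HX); apply: (mem_rw2 (r := nth [::] X r)).
  exact: mem_nth. exact: mem_nth.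
Qed.

Lemma row_lb N X r c : ssytS N X -> sorted geq (map size X) -> r < size X ->
  c < size (nth [::] X r) -> r < nth 0 (nth [::] X r) c.
Proof.
move=> HX Hsh; elim: r c => [|r IH] c Hr Hc.
  by have := ent_bnd HX Hr Hc; case/andP.
move: (HX) => /and3P [_ Hcol _].
have Hcr := (sortedP [::] Hcol) r Hr.
have Hsz : size (nth [::] X r.+1) <= size (nth [::] X r).
  have := (sortedP 0 Hsh) r; rewrite size_map => /(_ Hr).
  by rewrite !(nth_map [::]) //; apply: ltnW.
have := IH c (ltnW Hr) (leq_trans Hc Hsz).
have := colrelP _ _ Hcr c Hc; lia.
Qed.

Fixpoint xminf (s : nat) (mu : seq nat) : tableau :=
  match mu with
  | [::] => [::]
  | l :: mu' => nseq l s :: xminf s.+1 mu'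
  end.

Definition xmin mu := xminf 1 mu.

Lemma xminf_rcons s mu l : xminf s (rcons mu l) = rcons (xminf s mu) (nseq l (s + size mu)).
Proof. by elim: mu s => [|k mu IH] s /=; rewrite ?addn0 // IH addSnnS. Qed.

Lemma xminf_ent s mu x : x \in reading_word (xminf s mu) -> s <= x < s + size mu.
Proof.
move=> /mem_rw [r]; elim: mu s r => //= l mu IH s r; rewrite inE => /orP [/eqP ->|Hr].
  by rewrite mem_nseq => /andP [_ /eqP ->]; lia.
by move=> Hx; have := IH _ _ Hr Hx; lia.
Qed.

Lemma xminf_size s mu : map size (xminf s mu) = mu.
Proof. by elim: mu s => //= l mu IH s; rewrite size_nseq IH. Qed.

Lemma xmin_ssyt N mu : size mu <= N.+1 -> ssytS N (xmin mu).
Proof.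
rewrite /xmin => Hs; apply/and3P; split.
- elim: mu 1 {Hs} => //= l mu IH s; apply/andP; split; last exact: IH.
  by apply/(sortedP 0) => j; rewrite size_nseq !nth_nseq => Hj; rewrite Hj (ltnW Hj).
- elim: mu 1 {Hs} => //= l mu IH s.
  case: mu IH => [|l' mu] //= IH; apply/andP; split; last exact: IH.
  apply/colrelP => c; rewrite size_nseq !nth_nseq => ->; case: ifP => //.
- apply/allP => r Hr; apply/allP => x Hx.
  have := xminf_ent (mem_rw2 Hr Hx); rewrite /bnd; lia.
Qed.

Lemma count_rw p (X : tableau) : count p (reading_word X) = count p (flatten X).
Proof. by rewrite /reading_word !count_flatten map_rev sumn_rev. Qed.

Lemma rw_rcons (X : tableau) z : reading_word (rcons X z) = z ++ reading_word X.
Proof. by rewrite /reading_word rev_rcons. Qed.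

Lemma rw_cons (X : tableau) z : reading_word (z :: X) = reading_word X ++ z.
Proof. by rewrite /reading_word rev_cons flatten_rcons. Qed.

Lemma dead_E N mu X : sorted geq mu -> map size X = mu -> ssytS N X ->
  (forall i, 0 < i <= N -> opnf i (reading_word X) 0 = 0) -> X = xmin mu.
Proof.
elim/last_ind: X mu => [|X z IH] mu Hsh Hs HX Hop; first by rewrite -Hs.
rewrite -Hs map_rcons /xmin xminf_rcons.
have HX' : ssytS N X.
  move: HX; rewrite /ssytS -!cats1 !all_cat => /and3P [/andP [-> _] /cat_sorted2 [-> _]].
  by case/andP.
have Hsh' : sorted geq (map size X).
  by move: Hsh; rewrite -Hs map_rcons -cats1 => /cat_sorted2 [].
have EX : X = xmin (map size X).
  apply: (IH _ Hsh' erefl HX') => i Hi.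
  have := Hop i Hi; rewrite rw_rcons opnf_cat => H0.
  by have := @opnf_mono i (reading_word X) 0 (opnf i z 0) (leq0n _); rewrite H0 leqn0 => /eqP.
rewrite /xmin in EX; rewrite -EX size_map add1n.
have Hz : all (pred1 (size X).+1) z.
  apply/allP => v Hv; apply/negPn/negP => Hne.
  have Hvz : z = nth [::] (rcons X z) (size X) by rewrite nth_rcons ltnn eqxx.
  have Hc : index v z < size z by rewrite index_mem.
  have Hsh2 : sorted geq (map size (rcons X z)) by rewrite Hs.
  have Hlb := row_lb (r := size X) (c := index v z) HX Hsh2.
  rewrite size_rcons ltnSn -Hvz nth_index // in Hlb; have {}Hlb := Hlb isT Hc.
  have Hbv : v <= N.+1.
    have Hzz : z \in rcons X z by rewrite mem_rcons mem_head.
    by case/andP: (ssyt_bnd HX (mem_rw2 Hzz Hv)).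
  have Hi : 0 < v.-1 <= N by move: Hne => /eqP; lia.
  have := Hop _ Hi; rewrite rw_rcons opnf_cat opnf_irrel; last first.
    apply/allP => x Hx; rewrite EX in Hx; have := xminf_ent Hx; rewrite /irr size_map.
    move: Hne => /eqP; lia.
  apply/eqP; rewrite -lt0n; apply: leq_trans (opnf_sorted_ge _ _ _); last first.
    move: HX => /and3P [Hr _ _]; apply: (allP Hr); by rewrite mem_rcons mem_head.
  rewrite -has_count; apply/hasP; exists v => //=.
  by move: Hne => /eqP Hne; apply/eqP; lia.
by move/all_pred1P: Hz => {1}->.
Qed.


Lemma reach_min N mu X : sorted geq mu -> map size X = mu -> ssytS N X ->
  Ble N (xmin mu) X.
Proof.
move=> Hsh Hs HX.
have [k Hk] : exists k, sumn (reading_word X) < k by exists (sumn (reading_word X)).+1.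
elim: k X Hk Hs HX => // k IH X Hk Hs HX.
case Hh: (has (fun i => 0 < opnf i (reading_word X) 0) (iota 1 N)).
  move/hasP: Hh => [i]; rewrite mem_iota => /andP [Hi1 HiN] Hpos.
  have Hi : 0 < i <= N by lia.
  case: (unmatched_open Hpos) => [[]//|[u [v [Hw Hu Hv]]]].
  have Hw' : flatten (rev X) = u ++ i.+1 :: v by exact: Hw.
  case: (flatten_split Hw') => Y1 [L [R [Y2 [HY Hu' Hv']]]].
  have EX : X = rev Y2 ++ (L ++ i.+1 :: R) :: rev Y1.
    by rewrite -(revK X) HY rev_cat rev_cons cat_rcons.
  set Y := rev Y2 ++ (L ++ i :: R) :: rev Y1.
  have HF : Fop i Y = Some X.
    rewrite EX; apply: Fop_mk; rewrite revK; [by rewrite -Hu' | by rewrite -Hv'].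
  have HY' : ssytS N Y.
    rewrite /Y; apply: E_ssyt; rewrite -?EX ?revK //; [by rewrite Hs | by rewrite -Hu' | by rewrite -Hv'].
  have HsY : map size Y = mu by rewrite -Hs EX !map_cat /= !size_cat.
  have Hlt : sumn (reading_word Y) < k.
    have -> : reading_word Y = u ++ i :: v by rewrite rw_mid !revK Hu' Hv' -!catA.
    move: Hk; rewrite Hw !sumn_cat /=; lia.
  apply: rt_trans (IH Y Hlt HsY HY') (rt_step _ _ _ _ _).
  by exists i.
have -> : X = xmin mu.
  apply: (@dead_E N) => // i Hi; apply/eqP; rewrite -leqn0 leqNgt; apply/negP => Hp.
  move/negbT/hasPn: Hh => Hh.
  have : i \in iota 1 N by rewrite mem_iota; lia.
  by move/Hh; rewrite Hp.
exact: rt_refl.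
Qed.


Fixpoint xmax N (mu : seq nat) : tableau :=
  match mu with
  | [::] => [::]
  | l :: mu' => (map predn (head [::] (xmax N mu')) ++
                 nseq (l - size (head [::] (xmax N mu'))) N.+1) :: xmax N mu'
  end.

Lemma sorted_cat_leq (s1 s2 : seq nat) : sorted leq s1 -> sorted leq s2 ->
  (forall x y, x \in s1 -> y \in s2 -> x <= y) -> sorted leq (s1 ++ s2).
Proof.
rewrite !(sorted_pairwise leq_trans) => H1 H2 H; rewrite pairwise_cat.
by apply/and3P; split => //; apply/allrelP => x y; exact: H.
Qed.

Lemma size_head_xmax N mu : sorted geq mu ->
  size (head [::] (xmax N mu)) = head 0 mu /\ map size (xmax N mu) = mu.
Proof.
elim: mu => //= l mu IH Hs.
have [H1 H2] := IH (path_sorted Hs).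
have Hl : head 0 mu + (l - head 0 mu) = l.
  case: mu Hs {IH H1 H2} => [|l' mu] /=; first by rewrite subn0.
  by case/andP => Hl _; rewrite subnKC.
by rewrite H2 size_cat size_map size_nseq H1 Hl.
Qed.

Lemma xmax_size N mu : sorted geq mu -> map size (xmax N mu) = mu.
Proof. by case/(size_head_xmax N). Qed.

Lemma all_head (P : pred nat) (X : tableau) : all (all P) X -> all P (head [::] X).
Proof. by case: X => //= r X /andP []. Qed.

Lemma xmax_ent N mu : all (all (fun x => N.+2 - size mu <= x <= N.+1)) (xmax N mu).
Proof.
elim: mu => //= l mu IH; apply/andP; split; last first.
  by apply: sub_all IH => r; apply: sub_all => x /=; lia.
rewrite all_cat; apply/andP; split.
  rewrite all_map; apply/allP => x Hx /=.
  have := allP (all_head IH) x Hx; lia.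
by apply/allP => x; rewrite mem_nseq => /andP [_ /eqP ->]; lia.
Qed.

Lemma xmax_rows N mu : all (sorted leq) (xmax N mu).
Proof.
elim: mu => //= l mu IH; rewrite IH andbT; apply: sorted_cat_leq.
+ apply: homo_sorted; first by move=> x y; rewrite -!subn1; apply: leq_sub2r.
  by case: (xmax N mu) IH => //= h X /andP [].
+ by apply/(sortedP 0) => j; rewrite size_nseq !nth_nseq => Hj; rewrite Hj (ltnW Hj).
+ move=> x y /mapP [z Hz ->]; rewrite mem_nseq => /andP [_ /eqP ->].
  have := allP (all_head (xmax_ent N mu)) z Hz; lia.
Qed.

Lemma xmax_col N mu : size mu <= N.+1 -> sorted colrel (xmax N mu).
Proof.
elim: mu => //= l mu IH Hs.
have He := xmax_ent N mu.
case E: (xmax N mu) IH He => [|h X] //= IH He.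
rewrite IH; last by lia.
rewrite andbT; apply/colrelP => c Hc.
rewrite nth_cat size_map Hc (nth_map 0) //.
case/andP: He => He _.
have := allP He (nth 0 h c) (mem_nth 0 Hc); rewrite /=; lia.
Qed.

Lemma xmax_ssyt N mu : size mu <= N.+1 -> ssytS N (xmax N mu).
Proof.
move=> Hs; have He := xmax_ent N mu.
apply/and3P; split; [exact: xmax_rows | exact: xmax_col |].
apply/allP => r Hr; apply/allP => x Hx; have := allP (allP He r Hr) x Hx.
rewrite /bnd; lia.
Qed.


Lemma count_predn v (h : seq nat) : 0 < v ->
  count (pred1 v) (map predn h) = count (pred1 v.+1) h.
Proof.
move=> Hv; rewrite count_map; apply: eq_count => x /=.
by case: x => [|x] /=; [rewrite (_ : (0 == v) = false) //; apply/eqP; lia | rewrite eqSS].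
Qed.

Lemma count_xmax N mu v : 0 < v <= N ->
  count (pred1 v.+1) (flatten (xmax N mu)) =
  count (pred1 v) (flatten (xmax N mu)) + count (pred1 v.+1) (head [::] (xmax N mu)).
Proof.
move=> Hv; elim: mu => //= l mu IH.
rewrite !count_cat IH (@count_predn v); last by lia.
rewrite (_ : count (pred1 v) (nseq _ N.+1) = 0); last first.
  apply/eqP; rewrite -leqn0 leqNgt -has_count; apply/hasP => -[x].
  by rewrite mem_nseq => /andP [_ /eqP ->] /= /eqP; lia.
rewrite addn0.
set a := count _ (nseq _ _); set c := count _ (flatten _).
set d := count _ (head _ _); set e := count _ (map _ _); lia.
Qed.

Lemma sorted_count_eq (s t : seq nat) K : sorted leq s -> sorted leq t ->
  size s = size t -> (forall j, nth 0 s j <= nth 0 t j) -> all (fun y => y <= K) t ->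
  (forall v, 0 < v < K -> count (pred1 v) s <= count (pred1 v) t) ->
  all (fun x => 0 < x) s -> s = t.
Proof.
elim: s t => [|x s IH] [|y t] //= Hs Ht [Hsz] Hpw /andP [HyK HtK] Hc /andP [Hx0 Hs0].
have Hxy : x <= y by apply: (Hpw 0).
have Exy : x = y.
  apply/eqP; rewrite eqn_leq Hxy /= leqNgt; apply/negP => Hlt.
  have := Hc x; rewrite eqxx /=.
  have -> : count (pred1 x) t = 0.
    rewrite -(count_pred0 t); apply: eq_in_count => z Hz /=.
    by apply/eqP; have := allge_sorted Ht Hz; lia.
  have -> : (y == x) = false by apply/eqP; lia.
  have Hxk : 0 < x < K by apply/andP; split => //; lia.
  by move=> /(_ Hxk).
subst y; congr cons; apply: IH => //.
- exact: path_sorted Hs.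
- exact: path_sorted Ht.
- by move=> j; apply: (Hpw j.+1).
- move=> v Hv; have := Hc v Hv; rewrite leq_add2l; done.
Qed.


Lemma dead_F N mu X : sorted geq mu -> map size X = mu -> ssytS N X ->
  (forall i, 0 < i <= N -> good i (reading_word X) 0) -> X = xmax N mu.
Proof.
elim: mu X => [|l mu IH] [|x1 X] //= Hsh [Hl Hs] HX Hg.
have Hsh' := path_sorted Hsh.
move: (HX); rewrite /ssytS /= => /and3P [/andP [Hx1s HXr] Hc /andP [Hx1b HXb]].
have HX' : ssytS N X by apply/and3P; split => //; exact: path_sorted Hc.
have EX : X = xmax N mu.
  apply: IH => // i Hi; have := Hg i Hi; rewrite rw_cons good_cat; by case/andP.
rewrite -EX; congr cons.
set h := head [::] X.
have Hcol : colrel x1 h.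
  by rewrite /h; case: (X) Hc => [|h' X'] //= /andP [].
have [Hhsz _] := size_head_xmax N Hsh'.
rewrite -EX -/h in Hhsz.
have Hhs : size h <= l.
  by rewrite Hhsz; case: (mu) Hsh => [|l' mu'] //= /andP [].
have Hhb : all (fun x => x <= N.+1) h.
  have := all_head (xmax_ent N mu); rewrite -EX -/h.
  by apply: sub_all => x /andP [].
have HM1s : sorted leq (map predn h ++ nseq (l - size h) N.+1).
  by have := xmax_rows N (l :: mu); rewrite /= -EX -/h => /andP [].
apply: (@sorted_count_eq _ _ N.+1) => //.
- by rewrite size_cat size_map size_nseq Hl subnKC.
- move=> j; rewrite nth_cat size_map; case: ifP => Hj.
    rewrite (nth_map 0) //; have := colrelP _ _ Hcol j Hj.
    by move: (nth 0 x1 j) (nth 0 h j); clear; lia.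
  rewrite nth_nseq; case: ifP => Hj2.
    case: (ltnP j (size x1)) => Hj3; last by rewrite nth_default.
    by have := (all_nthP 0 Hx1b) j Hj3; rewrite /bnd => /andP [].
  rewrite nth_default //; move: Hj Hj2 Hhs; rewrite Hl; move: (size h); clear; lia.
- rewrite all_cat; apply/andP; split.
    by rewrite all_map; apply/allP => x Hx /=; apply: leq_trans (leq_pred _) _; apply: (allP Hhb x Hx).
  by apply/allP => x; rewrite mem_nseq => /andP [_ /eqP ->].
- move=> v /andP [Hv0 HvK].
  have Hv : 0 < v <= N by rewrite Hv0 -ltnS HvK.
  have Hg' := Hg v Hv; rewrite rw_cons in Hg'.
  set k := find (fun x => v < x) x1.
  rewrite -(cat_take_drop k x1) catA in Hg'.
  have Hp := good_prefix Hg'; rewrite !count_cat add0n in Hp.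
  have Hd : count (pred1 v) (drop k x1) = 0.
    apply/eqP; rewrite -leqn0 leqNgt -has_count; apply/hasP => -[y Hy /eqP Eyv].
    move: Hy; case: (ltnP k (size x1)) => Hk; last by rewrite drop_oversize.
    have Hvk : v < nth 0 x1 k by apply: (@nth_find _ 0 (fun x => v < x)); rewrite has_find.
    rewrite (drop_nth 0 Hk) inE => /orP [/eqP Ey|Hy]; first by move: Hvk; rewrite -Ey Eyv ltnn.
    by move: (sorted_drop_ge Hx1s Hk Hy) Hvk; rewrite Eyv; clear; lia.
  have Ht : count (pred1 v.+1) (take k x1) = 0.
    apply/eqP; rewrite -leqn0 leqNgt -has_count; apply/hasP => -[y /(nthP 0) [j Hj Ey] /eqP Eyv].
    have Hjk : j < k by move: Hj; rewrite size_take; case: (ltnP k (size x1)) => // Hks Hj; apply: leq_trans Hj Hks.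
    move: Ey; rewrite nth_take // => Ey.
    by have := @before_find _ 0 (fun x => v < x) x1 j Hjk; rewrite /= Ey Eyv ltnSn.
  rewrite Ht addn0 !count_rw {2}EX count_xmax // -EX -/h leq_add2l in Hp.
  rewrite -(cat_take_drop k x1) count_cat Hd addn0 count_cat (@count_predn v) //.
  rewrite (_ : count (pred1 v) (nseq _ N.+1) = 0) ?addn0; last first.
    apply/eqP; rewrite -leqn0 leqNgt -has_count; apply/hasP => -[x].
    by rewrite mem_nseq => /andP [_ /eqP ->] /= /eqP E; move: HvK; rewrite -E ltnn.
  exact: Hp.
- by apply: sub_all Hx1b => x /andP [].
Qed.

Lemma sumn_le K (s : seq nat) : all (fun x => x <= K) s -> sumn s <= K * size s.
Proof.
elim: s => //= x s IH /andP [Hx Hs]; rewrite mulnS; apply: leq_add => //; exact: IH.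
Qed.

Lemma size_rw (X : tableau) : size (reading_word X) = sumn (map size X).
Proof. by rewrite /reading_word size_flatten /shape map_rev sumn_rev. Qed.

Lemma reach_max N mu X : sorted geq mu -> size mu <= N.+1 -> map size X = mu ->
  ssytS N X -> Ble N X (xmax N mu).
Proof.
move=> Hsh Hsz Hs HX.
set K := N.+1 * sumn mu.
have [k Hk] : exists k, K - sumn (reading_word X) < k by exists (K - sumn (reading_word X)).+1.
elim: k X Hk Hs HX => // k IH X Hk Hs HX.
case Hh: (has (fun i => ~~ good i (reading_word X) 0) (iota 1 N)).
  move/hasP: Hh => [i]; rewrite mem_iota => /andP [Hi1 HiN] Hng.
  have Hi : 0 < i <= N by move: Hi1 HiN; clear; lia.
  case E: (Fop i X) => [Y|]; last by move/Fop_None: E; rewrite (negbTE Hng).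
  have [HY HsY] := F_ssyt HX Hi E.
  have HY2 : map size Y = mu by rewrite HsY.
  move: (E) => /Fop_inv [A [L [R [B [EX EY _ _]]]]].
  have Hsum : sumn (reading_word Y) = (sumn (reading_word X)).+1.
    rewrite EX EY !rw_mid !sumn_cat /=; move: (sumn _) (sumn L) (sumn R) (sumn (flatten (rev A))); clear; lia.
  have Hbd : sumn (reading_word Y) <= K.
    rewrite /K -HY2 -size_rw; apply: sumn_le; apply/allP => x Hx.
    by have := ssyt_bnd HY Hx; case/andP.
  have Hlt : K - sumn (reading_word Y) < k by move: Hk Hsum Hbd; clear; lia.
  apply: rt_trans (rt_step _ _ _ _ _) (IH Y Hlt HY2 HY).
  by exists i.
have -> : xmax N mu = X.
  symmetry; apply: dead_F => // i Hi.
  move/negbT/hasPn: Hh => Hh.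
  have : i \in iota 1 N by rewrite mem_iota; move: Hi; clear; lia.
  by move/Hh; rewrite negbK.
exact: rt_refl.
Qed.


Definition sh d (x : nat) := x + d.

Definition fmap (top bot : tableau) d (X : tableau) : tableau :=
  top ++ map (map (sh d)) X ++ bot.

Lemma opnf_sh i d w o : opnf (i + d) (map (sh d) w) o = opnf i w o.
Proof. exact: opnf_shift. Qed.

Lemma good_sh i d w o : good (i + d) (map (sh d) w) o = good i w o.
Proof. exact: good_shift. Qed.

Lemma rw_mapsh d (X : tableau) :
  reading_word (map (map (sh d)) X) = map (sh d) (reading_word X).
Proof. by rewrite /reading_word -map_rev map_flatten. Qed.

Lemma rw_fmap top bot d X : reading_word (fmap top bot d X) =
  reading_word bot ++ map (sh d) (reading_word X) ++ reading_word top.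
Proof. by rewrite /fmap !rw_cat rw_mapsh catA. Qed.

Lemma fmap_inj top bot d X Y : fmap top bot d X = fmap top bot d Y -> X = Y.
Proof.
rewrite /fmap => /(congr1 (drop (size top))); rewrite !drop_size_cat // => E.
have Hs : size X = size Y.
  by have := congr1 size E; rewrite !size_cat !size_map => /eqP; rewrite eqn_add2r => /eqP.
move: E => /(congr1 (take (size X))); rewrite take_size_cat ?size_map //.
rewrite Hs take_size_cat ?size_map //.
apply: inj_map; apply: inj_map => x y; rewrite /sh; exact: addIn.
Qed.

Lemma all_rw_irr (P : pred nat) i (T : tableau) :
  all P (reading_word T) -> (forall x, P x -> irr i x) -> all (irr i) (reading_word T).
Proof. by move=> H HP; apply/allP => x Hx; apply: HP; apply: (allP H). Qed.

Lemma commute top bot d N j X :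
  all (fun x => x <= d) (reading_word top) ->
  all (fun x => N + d + 1 < x) (reading_word bot) ->
  0 < j <= N ->
  Fop (j + d) (fmap top bot d X) = omap (fmap top bot d) (Fop j X).
Proof.
move=> Htop Hbot Hj.
have Itop : all (irr (j + d)) (reading_word top).
  by apply: (all_rw_irr Htop) => x Hx; rewrite /irr; apply/andP; split; apply/eqP; move: Hx Hj; clear; lia.
have Ibot : all (irr (j + d)) (reading_word bot).
  by apply: (all_rw_irr Hbot) => x Hx; rewrite /irr; apply/andP; split; apply/eqP; move: Hx Hj; clear; lia.
case E: (Fop j X) => [X'|] /=.
  move: E => /Fop_inv [A [L [R [B [-> -> Hu Hv]]]]].
  have EF : forall x, fmap top bot d (A ++ (L ++ x :: R) :: B) =
     (top ++ map (map (sh d)) A) ++ (map (sh d) L ++ (x + d) :: map (sh d) R) ::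
     (map (map (sh d)) B ++ bot).
    by move=> x; rewrite /fmap map_cat /= map_cat /= -!catA.
  rewrite !EF addSn; apply: Fop_mk.
    rewrite rev_cat flatten_cat -catA opnf_cat (@opnf_irrel _ (flatten (rev bot))) //.
    by rewrite -map_rev -map_flatten -map_cat opnf_sh.
  rewrite rev_cat flatten_cat -map_rev -map_flatten catA -map_cat good_cat good_sh Hv /=.
  exact: good_irrel.
apply/Fop_None; move/Fop_None: E => E.
rewrite rw_fmap good_cat good_irrel //= (@opnf_irrel _ (reading_word bot)) // good_cat good_sh E /=.
exact: good_irrel.
Qed.

Definition tle (T T' : tableau) :=
  map size T = map size T' /\ forall p, nth 0 (reading_word T) p <= nth 0 (reading_word T') p.

Lemma tle_refl T : tle T T.
Proof. by split. Qed.

Lemma tle_trans T1 T2 T3 : tle T1 T2 -> tle T2 T3 -> tle T1 T3.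
Proof. by move=> [H1 H2] [H3 H4]; split; [rewrite H1 | move=> p; apply: leq_trans (H2 p) (H4 p)]. Qed.

Lemma nth_le_mid (u v : seq nat) x p : nth 0 (u ++ x :: v) p <= nth 0 (u ++ x.+1 :: v) p.
Proof. by rewrite !nth_cat; case: ifP => // _; case: (p - size u). Qed.

Lemma step_tle N T T' : step N T T' -> tle T T'.
Proof.
move=> [i _ /Fop_inv [A [L [R [B [-> -> _ _]]]]]]; split.
  by rewrite !map_cat /= !size_cat.
by move=> p; rewrite !rw_mid -!catA /= !catA; apply: nth_le_mid.
Qed.

Lemma Ble_tle N T T' : Ble N T T' -> tle T T'.
Proof.
elim=> [x y /step_tle //| x | x y z _ H1 _ H2]; [exact: tle_refl | exact: tle_trans H1 H2].
Qed.

Lemma Ble_fwd top bot d N n X1 X2 :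
  all (fun x => x <= d) (reading_word top) ->
  all (fun x => N + d + 1 < x) (reading_word bot) -> N + d <= n ->
  Ble N X1 X2 -> Ble n (fmap top bot d X1) (fmap top bot d X2).
Proof.
move=> Htop Hbot HNn; elim=> [x y [j Hj E]| x | x y z _ H1 _ H2].
- apply: rt_step; exists (j + d); first by move: Hj HNn; clear; lia.
  by rewrite (@commute top bot d N j x Htop Hbot Hj) E.
- exact: rt_refl.
- exact: rt_trans H1 H2.
Qed.


Lemma back_step top bot d N X Y X1 i W' :
  all (fun x => x <= d) (reading_word top) ->
  all (fun x => N + d + 1 < x) (reading_word bot) ->
  ssytS N X -> ssytS N Y -> map size X = map size Y ->
  tle (fmap top bot d X) (fmap top bot d X1) -> Fop i (fmap top bot d X1) = Some W' ->
  tle W' (fmap top bot d Y) ->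
  exists2 X2, Fop (i - d) X1 = Some X2 & W' = fmap top bot d X2 /\ 0 < i - d <= N.
Proof.
move=> Htop Hbot HX HY Hsh [_ H1] HF [_ H2].
move: (HF) => /Fop_inv [A [L [R [B [E1 E2 _ _]]]]].
set p := size (flatten (rev B) ++ L).
have Hi1 : nth 0 (reading_word (fmap top bot d X)) p <= i.
  by have := H1 p; rewrite E1 rw_mid -!catA /= catA nth_cat ltnn subnn.
have Hi2 : i.+1 <= nth 0 (reading_word (fmap top bot d Y)) p.
  by have := H2 p; rewrite E2 rw_mid -!catA /= catA nth_cat ltnn subnn.
rewrite !rw_fmap in Hi1 Hi2.
have Hsm : size (reading_word Y) = size (reading_word X) by rewrite !size_rw Hsh.
case: (ltnP p (size (reading_word bot))) => Hp1.
  rewrite !nth_cat Hp1 in Hi1 Hi2; move: Hi1 Hi2; clear; lia.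
have Hp1' : (p < size (reading_word bot)) = false by rewrite ltnNge Hp1.
case: (ltnP (p - size (reading_word bot)) (size (reading_word X))) => Hp2; last first.
  have Hp2' : (p - size (reading_word bot) < size (reading_word X)) = false by rewrite ltnNge Hp2.
  rewrite nth_cat Hp1' nth_cat size_map Hp2' in Hi1.
  rewrite nth_cat Hp1' nth_cat size_map Hsm Hp2' in Hi2.
  move: Hi1 Hi2; clear; lia.
rewrite nth_cat Hp1' nth_cat size_map Hp2 (nth_map 0) // in Hi1.
rewrite nth_cat Hp1' nth_cat size_map Hsm Hp2 (nth_map 0) ?Hsm // in Hi2.
have B1 := ssyt_bnd HX (mem_nth 0 Hp2).
have B2 : nth 0 (reading_word Y) (p - size (reading_word bot)) <= N.+1.
  by have := ssyt_bnd HY (mem_nth 0 (eq_ind_r (fun k => _ < k) Hp2 Hsm)); case/andP.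
rewrite /sh in Hi1 Hi2.
have a1 : d < i.
  by apply: leq_trans Hi1; rewrite -{1}(add0n d) ltn_add2r; case/andP: B1.
have a2 : i < N.+1 + d by apply: leq_trans Hi2 _; rewrite leq_add2r.
have Hj : 0 < i - d <= N by move: a1 a2; clear; lia.
have Ei : i = (i - d) + d by move: a1; clear; lia.
have := @commute top bot d N (i - d) X1 Htop Hbot Hj; rewrite -Ei HF.
by case: (Fop (i - d) X1) => [X2|] //= [E]; exists X2 => //; split => //.
Qed.

Lemma Ble_back top bot d N n X Y :
  all (fun x => x <= d) (reading_word top) ->
  all (fun x => N + d + 1 < x) (reading_word bot) ->
  ssytS N X -> ssytS N Y -> map size X = map size Y ->
  Ble n (fmap top bot d X) (fmap top bot d Y) -> Ble N X Y.
Proof.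
move=> Htop Hbot HX HY Hsh /clos_rt_rt1n_iff H.
suff : forall W V, clos_refl_trans_1n _ (step n) W V -> V = fmap top bot d Y ->
  forall X1, W = fmap top bot d X1 -> tle (fmap top bot d X) W -> Ble N X1 Y.
  by move=> /(_ _ _ H erefl X erefl (tle_refl _)).
move=> W V; elim=> [x|x y z Hxy Hyz IH] EV X1 EW Hle.
  by rewrite EW in EV; rewrite (fmap_inj EV); apply: rt_refl.
case: Hxy => i Hi HF.
have Hyle : tle y (fmap top bot d Y) by rewrite -EV; apply: Ble_tle (clos_rt1n_rt _ _ _ _ Hyz).
rewrite EW in HF Hle.
have [X2 HF2 [Ey Hj]] := back_step Htop Hbot HX HY Hsh Hle HF Hyle.
apply: rt_trans (rt_step _ _ _ _ _) (IH EV X2 Ey _); first by exists (i - d).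
apply: tle_trans Hle (step_tle (N := n) _).
by exists i.
Qed.


Lemma colrel_sep (u w : seq nat) : (forall x y, x \in u -> y \in w -> x < y) ->
  (forall y, y \in w -> 0 < y) -> colrel u w.
Proof.
move=> H H0; apply/colrelP => c Hc; case: (ltnP c (size u)) => Hcu.
  by apply: H; apply: mem_nth.
by rewrite nth_default //; apply: H0; apply: mem_nth.
Qed.

Lemma sorted_cat_all (T : eqType) (r : rel T) s1 s2 : sorted r s1 -> sorted r s2 ->
  (forall x y, x \in s1 -> y \in s2 -> r x y) -> sorted r (s1 ++ s2).
Proof.
case: s1 => [|x0 s1] //= H1 H2 H; rewrite cat_path H1 /=.
case: s2 H2 H => [|y s2] //= H2 H; rewrite H2 andbT; apply: H.
  by rewrite mem_last.
by rewrite mem_head.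
Qed.

Lemma colrel_shift d u w : colrel u w -> colrel (map (sh d) u) (map (sh d) w).
Proof.
move=> H; apply/colrelP => c; rewrite size_map => Hc.
rewrite (nth_map 0 0 (sh d) Hc).
have := colrelP _ _ H c Hc; case: (ltnP c (size u)) => Hcu.
  by rewrite (nth_map 0 0 (sh d) Hcu) /sh ltn_add2r.
have Hcu' : size (map (sh d) u) <= c by rewrite size_map.
by rewrite (nth_default 0 Hcu) (nth_default 0 Hcu') /sh => Hw; apply: ltn_addr.
Qed.

Lemma mem_rw_map d (X : tableau) x r : r \in map (map (sh d)) X -> x \in r ->
  exists2 y, y \in reading_word X & x = y + d.
Proof.
move=> /mapP [r0 Hr0 ->] /mapP [y Hy ->]; exists y => //; exact: mem_rw2 Hr0 Hy.
Qed.

Lemma fmap_ssyt top bot d N n X : ssytS n top -> ssytS n bot ->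
  all (fun x => x <= d) (reading_word top) ->
  all (fun x => N + d + 1 < x) (reading_word bot) -> N + d <= n ->
  ssytS N X -> ssytS n (fmap top bot d X).
Proof.
move=> /and3P [Tr Tc Tb] /and3P [Br Bc Bb] Htop Hbot HNn /and3P [Xr Xc Xb].
have HXb : forall y, y \in reading_word X -> 0 < y <= N.+1.
  by move=> y; apply: ssyt_bnd; apply/and3P.
have Hmid : forall x r, r \in map (map (sh d)) X -> x \in r -> d < x <= N.+1 + d.
  move=> x r Hr Hx; have [y Hy ->] := mem_rw_map Hr Hx; have := HXb y Hy.
  by clear; lia.
have Htp : forall x r, r \in top -> x \in r -> x <= d.
  by move=> x r Hr Hx; apply: (allP Htop); apply: mem_rw2 Hr Hx.
have Hbt : forall x r, r \in bot -> x \in r -> N + d + 1 < x.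
  by move=> x r Hr Hx; apply: (allP Hbot); apply: mem_rw2 Hr Hx.
apply/and3P; split.
- rewrite /fmap !all_cat Tr Br /= andbT all_map; apply/allP => r Hr /=.
  rewrite sorted_map; apply: sub_sorted (allP Xr r Hr) => x y /=.
  by rewrite /sh leq_add2r.
- rewrite /fmap; apply: sorted_cat_all => //.
    apply: sorted_cat_all => //.
      by rewrite sorted_map; apply: sub_sorted Xc => u w; apply: colrel_shift.
    move=> u w Hu Hw; apply: colrel_sep.
      move=> x y Hx Hy; have := Hmid x u Hu Hx; have := Hbt y w Hw Hy; clear; lia.
    by move=> y Hy; have := Hbt y w Hw Hy; clear; lia.
  move=> u w Hu; rewrite mem_cat => /orP [Hw|Hw]; apply: colrel_sep.
  + move=> x y Hx Hy; have := Htp x u Hu Hx; have := Hmid y w Hw Hy; clear; lia.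
  + by move=> y Hy; have := Hmid y w Hw Hy; clear; lia.
  + move=> x y Hx Hy; have := Htp x u Hu Hx; have := Hbt y w Hw Hy; clear; lia.
  + by move=> y Hy; have := Hbt y w Hw Hy; clear; lia.
- rewrite /fmap !all_cat Tb Bb /= andbT; apply/allP => r Hr; apply/allP => x Hx.
  by rewrite /bnd; have := Hmid x r Hr Hx; move: HNn; clear; lia.
Qed.

Lemma shape_split (Z : tableau) s1 s2 s3 : map size Z = s1 ++ s2 ++ s3 ->
  exists Za Zb Zc, [/\ Z = Za ++ Zb ++ Zc, map size Za = s1, map size Zb = s2 &
                      map size Zc = s3].
Proof.
move=> H.
exists (take (size s1) Z), (take (size s2) (drop (size s1) Z)), (drop (size s2) (drop (size s1) Z)).
split; first by rewrite !cat_take_drop.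
- by rewrite map_take H take_size_cat.
- by rewrite map_take map_drop H drop_size_cat // take_size_cat.
- by rewrite !map_drop H !drop_size_cat.
Qed.

Lemma tle_cat A1 A2 B1 B2 : map size A1 = map size B1 -> tle (A1 ++ A2) (B1 ++ B2) ->
  tle A1 B1 /\ tle A2 B2.
Proof.
move=> Hs1 [Hs H].
have Hs2 : map size A2 = map size B2.
  by move: Hs; rewrite !map_cat Hs1 => /(congr1 (drop (size (map size B1)))); rewrite !drop_size_cat.
have Hz : size (reading_word A2) = size (reading_word B2) by rewrite !size_rw Hs2.
split; split => // p.
  by have := H (size (reading_word A2) + p); rewrite !rw_cat !nth_cat Hz ltnNge leq_addr /= addKn.
case: (ltnP p (size (reading_word A2))) => Hp.
  by have := H p; rewrite !rw_cat !nth_cat Hp -Hz Hp.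
by rewrite nth_default.
Qed.

Lemma tle_antisym A B : tle A B -> tle B A -> A = B.
Proof.
move=> [Hs H1] [_ H2]; apply: tab_det => //.
apply: (@eq_from_nth _ 0); first by rewrite !size_rw Hs.
by move=> p _; apply/eqP; rewrite eqn_leq H1 H2.
Qed.

Lemma interval_img top bot d N n mu Xmin Xmax Z :
  ssytS N Xmin -> ssytS N Xmax -> map size Xmin = mu -> map size Xmax = mu ->
  ssytS n Z -> tle (fmap top bot d Xmin) Z -> tle Z (fmap top bot d Xmax) ->
  exists2 X, map size X = mu /\ ssytS N X & fmap top bot d X = Z.
Proof.
move=> HXmin HXmax Smin Smax HZ H1 H2.
have HsZ : map size Z = map size top ++ mu ++ map size bot.
  case: H1 => <- _; rewrite /fmap !map_cat -Smin; congr (_ ++ _ ++ _).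
  by rewrite -map_comp; apply: eq_map => r /=; rewrite size_map.
have [Za [Zb [Zc [EZ Sa Sb Sc]]]] := shape_split HsZ.
have Ssh : forall X, map size (map (map (sh d)) X) = map size X.
  by move=> X; rewrite -map_comp; apply: eq_map => r /=; rewrite size_map.
rewrite EZ /fmap in H1 H2.
have [H1a H1'] := tle_cat (esym Sa) H1.
have [H1b H1c] := tle_cat (etrans (Ssh _) (etrans Smin (esym Sb))) H1'.
have [H2a H2'] := tle_cat Sa H2.
have [H2b H2c] := tle_cat (etrans Sb (esym (etrans (Ssh _) Smax))) H2'.
have Ea : Za = top := tle_antisym H2a H1a.
have Ec : Zc = bot := tle_antisym H2c H1c.
have Hsz : forall X, map size X = mu -> size (reading_word X) = size (reading_word Zb).
  by move=> X HX; rewrite !size_rw HX Sb.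
have Hbd : forall x, x \in reading_word Zb -> d < x <= N.+1 + d.
  move=> x /(nthP 0) [p Hp <-].
  have Hp1 : p < size (reading_word Xmin) by rewrite Hsz.
  have Hp2 : p < size (reading_word Xmax) by rewrite Hsz.
  have := H1b.2 p; have := H2b.2 p; rewrite !rw_mapsh.
  rewrite (nth_map 0 0 (sh d) Hp1) (nth_map 0 0 (sh d) Hp2) /sh.
  have := ssyt_bnd HXmin (mem_nth 0 Hp1); have := ssyt_bnd HXmax (mem_nth 0 Hp2).
  move: (nth 0 (reading_word Zb) p) (nth 0 (reading_word Xmin) p) (nth 0 (reading_word Xmax) p).
  clear; lia.
have Hbd2 : forall x r, r \in Zb -> x \in r -> d < x <= N.+1 + d.
  by move=> x r Hr Hx; apply: Hbd; apply: mem_rw2 Hr Hx.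
exists (map (map (subn^~ d)) Zb).
  split; first by rewrite -map_comp -Sb; apply: eq_map => r /=; rewrite size_map.
  move: HZ; rewrite EZ /ssytS => /and3P [Zr Zcol Zbd].
  apply/and3P; split.
  - move: Zr; rewrite !all_cat => /and3P [_ Zr _].
    rewrite all_map; apply/allP => r Hr /=; rewrite sorted_map.
    by apply: sub_sorted (allP Zr r Hr) => x y /= Hxy; apply: leq_sub2r.
  - have [_ Zcol'] := cat_sorted2 Zcol; have [Zcol2 _] := cat_sorted2 Zcol'.
    rewrite sorted_map.
    apply: (@sub_in_sorted _ (fun r => all (fun x => d < x) r)); last exact: Zcol2.
      move=> u w Hu Hw Huw /=; apply/colrelP => c; rewrite size_map => Hc.
      rewrite (nth_map 0 0 _ Hc).
      have Hwc : d < nth 0 w c by apply: (allP Hw); apply: mem_nth.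
      case: (ltnP c (size u)) => Hcu.
        rewrite (nth_map 0 0 _ Hcu); apply: ltn_sub2r => //.
        exact: (colrelP _ _ Huw c Hc).
      have Hcu' : size (map (subn^~ d) u) <= c by rewrite size_map.
      by rewrite (nth_default 0 Hcu') subn_gt0.
    apply/allP => r Hr; apply/allP => x Hx; have := Hbd2 x r Hr Hx; clear; lia.
  - apply/allP => r /mapP [r0 Hr0 ->]; apply/allP => x /mapP [y Hy ->].
    by rewrite /bnd; have := Hbd2 y r0 Hr0 Hy; clear; lia.
rewrite EZ Ea Ec /fmap; congr (_ ++ _ ++ _).
rewrite -map_comp; apply: map_id_in => r Hr /=; rewrite -map_comp; apply: map_id_in => x Hx /=.
by rewrite /sh subnK //; have := Hbd2 x r Hr Hx; clear; lia.
Qed.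

Lemma lattice_transfer (P Q : tableau -> Prop) (leP leQ : relation tableau)
  (f : tableau -> tableau) S T :
  (forall x y z, leP x y -> leP y z -> leP x z) -> P S -> P T ->
  (forall X, Q X -> P (f X) /\ leP S (f X) /\ leP (f X) T) ->
  (forall Z, P Z -> leP S Z -> leP Z T -> exists2 X, Q X & f X = Z) ->
  (forall X Y, Q X -> Q Y -> (leQ X Y <-> leP (f X) (f Y))) ->
  is_lattice P leP -> is_lattice Q leQ.
Proof.
move=> Htr HS HT Hf Hint Hiso HL x y Hx Hy.
have [Px [Sx xT]] := Hf x Hx; have [Py [Sy yT]] := Hf y Hy.
have [[z [Pz xz yz Hz]] [w [Pw wx wy Hw]]] := HL _ _ Px Py.
split.
  have zT := Hz T HT xT yT.
  have [X Hq EX] := Hint z Pz (Htr _ _ _ Sx xz) zT.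
  exists X; split => //; rewrite ?Hiso ?EX //.
  move=> u Hu; rewrite !Hiso // EX => Hxu Hyu.
  by have [Pu _] := Hf u Hu; apply: Hz.
have Sw := Hw S HS Sx Sy.
have [X Hq EX] := Hint w Pw Sw (Htr _ _ _ wx xT).
exists X; split => //; rewrite ?Hiso ?EX //.
move=> u Hu; rewrite !Hiso // EX => Hux Huy.
by have [Pu _] := Hf u Hu; apply: Hw.
Qed.


Definition crows (g v : nat -> nat) k : tableau := mkseq (fun r => nseq (g r) (v r)) k.

Lemma crows_rw g v k x : x \in reading_word (crows g v k) -> exists2 r, r < k & x = v r.
Proof.
move=> /mem_rw [row /mapP [r]]; rewrite mem_iota add0n => /andP [_ Hr] -> /=.
by rewrite mem_nseq => /andP [_ /eqP ->]; exists r.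
Qed.

Lemma crows_ssyt n g v k : (forall r, r < k -> 0 < v r <= n.+1) ->
  (forall r, r.+1 < k -> v r < v r.+1) -> ssytS n (crows g v k).
Proof.
move=> Hb Hi; apply/and3P; split.
- rewrite /crows /mkseq all_map; apply/allP => r _ /=.
  by apply/(sortedP 0) => j; rewrite size_nseq !nth_nseq => Hj; rewrite Hj (ltnW Hj).
- apply/(sortedP [::]) => r; rewrite size_mkseq => Hr.
  rewrite !nth_mkseq //; last exact: ltnW.
  apply: colrel_sep.
    move=> x y; rewrite !mem_nseq => /andP [_ /eqP ->] /andP [_ /eqP ->]; exact: Hi.
  by move=> y; rewrite mem_nseq => /andP [_ /eqP ->]; have := Hb r.+1 Hr; case/andP.
- apply/allP => row /mapP [r]; rewrite mem_iota add0n => /andP [_ Hr] -> /=.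
  by apply/allP => x; rewrite mem_nseq => /andP [_ /eqP ->]; apply: Hb.
Qed.

Lemma crows_size g v k : map size (crows g v k) = mkseq g k.
Proof. by rewrite /crows /mkseq -map_comp; apply: eq_map => r /=; rewrite size_nseq. Qed.

Lemma mkseq_take (s : seq nat) k : k <= size s -> mkseq (nth 0 s) k = take k s.
Proof.
move=> Hk; apply: (@eq_from_nth _ 0); first by rewrite size_mkseq size_take; case: ltngtP Hk; lia.
by move=> i; rewrite size_mkseq => Hi; rewrite nth_mkseq // nth_take.
Qed.

Lemma mkseq_drop (s : seq nat) b : mkseq (fun r => nth 0 s (b + r)) (size s - b) = drop b s.
Proof.
apply: (@eq_from_nth _ 0); first by rewrite size_mkseq size_drop.
by move=> i; rewrite size_mkseq => Hi; rewrite nth_mkseq // nth_drop.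
Qed.

Unset Implicit Arguments.

Theorem lemma5p1 (lambda : seq nat) (a b n : nat) :
  is_partition lambda ->
  1 <= a -> a <= b -> b <= size lambda ->
  size lambda <= n ->
  let l := size lambda in
  let mu := drop a.-1 (take b lambda) in
  let m := b - a + 1 in
  (exists (S T : tableau) (f : tableau -> tableau),
     B lambda n S /\ B lambda n T /\ Ble n S T /\
     (forall X, B mu (n - l + m) X ->
        B lambda n (f X) /\ Ble n S (f X) /\ Ble n (f X) T) /\
     (forall X Y, B mu (n - l + m) X -> B mu (n - l + m) Y ->
        f X = f Y -> X = Y) /\
     (forall Z, B lambda n Z -> Ble n S Z -> Ble n Z T ->
        exists2 X, B mu (n - l + m) X & f X = Z) /\
     (forall X Y, B mu (n - l + m) X -> B mu (n - l + m) Y ->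
        (Ble (n - l + m) X Y <-> Ble n (f X) (f Y))))
  /\
  (~ is_lattice (B mu (n - l + m)) (Ble (n - l + m)) ->
   ~ is_lattice (B lambda n) (Ble n)).
Proof.
move=> Hpart Ha Hab Hbl Hln l mu m.
set N := n - l + m.
set d := a.-1.
set top := crows (nth 0 lambda) succn d.
set bot := crows (fun r => nth 0 lambda (b + r)) (fun r => (n + b + r).+2 - l) (l - b).
set f := fmap top bot d.
have Hd : d <= b by rewrite /d; move: Ha Hab; clear; lia.
have Htop : all (fun x => x <= d) (reading_word top).
  by apply/allP => x /crows_rw [r Hr ->].
have Hbot : all (fun x => N + d + 1 < x) (reading_word bot).
  apply/allP => x /crows_rw [r Hr ->].
  by rewrite /N /m /d /l; move: Ha Hab Hbl Hln Hr; rewrite /l; clear; lia.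
have HNn : N + d <= n by rewrite /N /m /d /l; move: Ha Hab Hbl Hln; rewrite /l; clear; lia.
have Ttop : ssytS n top.
  apply: crows_ssyt => r Hr //; rewrite /d in Hr; apply/andP; split => //.
  by move: Hr Ha Hab Hbl Hln; clear; lia.
have Tbot : ssytS n bot.
  apply: crows_ssyt => r Hr; rewrite /l in Hr *; move: Hr Ha Hab Hbl Hln; clear; lia.
case/andP: Hpart => Hlsort _.
have Hmus : sorted geq mu.
  have H1 : sorted geq (take b lambda).
    by move: Hlsort; rewrite -{1}(cat_take_drop b lambda) => /cat_sorted2 [].
  by move: H1; rewrite /mu -{1}(cat_take_drop a.-1 (take b lambda)) => /cat_sorted2 [].
have Hmusz : size mu = m.
  by rewrite /mu /m size_drop size_take; case: ltngtP Hbl; move: Ha Hab; clear; lia.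
have HmN : size mu <= N.+1 by rewrite Hmusz /N; move: Hln; rewrite /l; clear; lia.
have Hshape : forall X, map size X = mu -> map size (f X) = lambda.
  move=> X HX; rewrite /f /fmap !map_cat !crows_size mkseq_drop mkseq_take; last first.
    by move: Hd Hbl; clear; lia.
  have -> : map size (map (map (sh d)) X) = mu.
    by rewrite -HX -map_comp; apply: eq_map => r /=; rewrite size_map.
  by rewrite /mu -(take_takel _ Hd) catA cat_take_drop cat_take_drop.
have HfB : forall X, B mu N X -> B lambda n (f X).
  move=> X /ssytE [HX HXs]; apply/ssytE; split; first exact: Hshape.
  exact: (fmap_ssyt Ttop Tbot Htop Hbot HNn HXs).
set Xmin := xmin mu.
set Xmax := xmax N mu.
have BXmin : B mu N Xmin by apply/ssytE; split; [exact: xminf_size | exact: xmin_ssyt].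
have BXmax : B mu N Xmax by apply/ssytE; split; [exact: xmax_size | exact: xmax_ssyt].
have Hmin : forall X, B mu N X -> Ble N Xmin X.
  by move=> X /ssytE [HX HXs]; apply: reach_min.
have Hmax : forall X, B mu N X -> Ble N X Xmax.
  by move=> X /ssytE [HX HXs]; apply: reach_max.
have Hfwd : forall X Y, Ble N X Y -> Ble n (f X) (f Y).
  by move=> X Y; apply: Ble_fwd.
have Hiso : forall X Y, B mu N X -> B mu N Y -> (Ble N X Y <-> Ble n (f X) (f Y)).
  move=> X Y /ssytE [HX HXs] /ssytE [HY HYs]; split; first exact: Hfwd.
  by apply: Ble_back => //; rewrite HX HY.
have Hint : forall Z, B lambda n Z -> Ble n (f Xmin) Z -> Ble n Z (f Xmax) ->
    exists2 X, B mu N X & f X = Z.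
  move=> Z /ssytE [_ HZ] H1 H2.
  have [X [HX HXs] EX] := @interval_img top bot d N n mu Xmin Xmax Z
    (proj2 (proj1 (ssytE _ _ _) BXmin)) (proj2 (proj1 (ssytE _ _ _) BXmax))
    (proj1 (proj1 (ssytE _ _ _) BXmin)) (proj1 (proj1 (ssytE _ _ _) BXmax))
    HZ (Ble_tle H1) (Ble_tle H2).
  by exists X => //; apply/ssytE.
have Hprops : forall X, B mu N X -> B lambda n (f X) /\ Ble n (f Xmin) (f X) /\ Ble n (f X) (f Xmax).
  move=> X HX; split; first exact: HfB.
  by split; apply: Hfwd; [apply: Hmin | apply: Hmax].
split.
  exists (f Xmin), (f Xmax), f.
  split; first exact: HfB.
  split; first exact: HfB.
  split; first by apply: Hfwd; apply: Hmin.
  split; first exact: Hprops.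
  split; first by move=> X Y _ _; apply: fmap_inj.
  split; first exact: Hint.
  exact: Hiso.
move=> HnQ HP; apply: HnQ.
apply: (lattice_transfer (f := f) (S := f Xmin) (T := f Xmax)) HP.
- by move=> x y z; apply: rt_trans.
- exact: HfB.
- exact: HfB.
- exact: Hprops.
- exact: Hint.
- exact: Hiso.
Qed.
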